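(* Let $A,B\in\mathcal M_n$ be accretive and $f\in\mathfrak m$. Then $$\Re(A\sigma_fB)\ge(\Re A)\,\sigma_f\,(\Re B).$$ In particular, $A\sigma_fB$ is accretive.
   Context: A matrix $A$ is accretive if $\Re A=\frac{A+A^*}{2}$ is positive definite. $\le$ is the Löwner order. $\mathfrak m$ is the set of matrix monotone $f:(0,\infty)\to(0,\infty)$ with $f(1)=1$; each has a unique probability measure $\nu_f$ on $[0,1]$ with $f(x)=\int_0^1((1-t)+tx^{-1})^{-1}d\nu_f(t)$, $x>0$. For accretive (in particular positive definite) $A,B$: $A!_tB=((1-t)A^{-1}+tB^{-1})^{-1}$ and $A\sigma_fB:=\int_0^1A!_tB\,d\nu_f(t)$ (for positive definite $A,B$ this is the Kubo–Ando mean $A^{1/2}f(A^{-1/2}BA^{-1/2})A^{1/2}$). *)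

(* Defs.v *)
From Stdlib Require Import Reals ClassicalEpsilon.
Open Scope R_scope.

Record C := mkC { re : R; im : R }.
Definition C0 : C := mkC 0 0.
Definition C1 : C := mkC 1 0.
Definition RtoC (r : R) : C := mkC r 0.
Definition Cadd (z w : C) : C := mkC (re z + re w) (im z + im w).
Definition Copp (z : C) : C := mkC (- re z) (- im z).
Definition Cmul (z w : C) : C :=
  mkC (re z * re w - im z * im w) (re z * im w + im z * re w).
Definition Cconj (z : C) : C := mkC (re z) (- im z).
Definition Cscal (r : R) (z : C) : C := mkC (r * re z) (r * im z).

Fixpoint Csum (n : nat) (g : nat -> C) : C :=
  match n with O => C0 | S m => Cadd (Csum m g) (g m) end.

(* ---------- matrices: an n x n matrix is given by its entries (i,j), i,j < n;
   entries outside the n x n block are irrelevant ---------- *)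
Definition Mat := nat -> nat -> C.
Definition Vec := nat -> C.

Definition meq (n : nat) (A B : Mat) : Prop :=
  forall i j, (i < n)%nat -> (j < n)%nat -> A i j = B i j.
Definition mId : Mat := fun i j => if Nat.eqb i j then C1 else C0.
Definition mzero : Mat := fun _ _ => C0.
Definition madd (A B : Mat) : Mat := fun i j => Cadd (A i j) (B i j).
Definition msub (A B : Mat) : Mat := fun i j => Cadd (A i j) (Copp (B i j)).
Definition mscal (r : R) (A : Mat) : Mat := fun i j => Cscal r (A i j).
Definition mmul (n : nat) (A B : Mat) : Mat :=
  fun i j => Csum n (fun k => Cmul (A i k) (B k j)).
Definition madj (A : Mat) : Mat := fun i j => Cconj (A j i).
Definition mdiag (l : nat -> R) : Mat :=
  fun i j => if Nat.eqb i j then RtoC (l i) else C0.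

Definition ReM (A : Mat) : Mat := mscal (/ 2) (madd A (madj A)).

Definition qform (n : nat) (A : Mat) (x : Vec) : C :=
  Csum n (fun i => Csum n (fun j => Cmul (Cconj (x i)) (Cmul (A i j) (x j)))).
Definition nonzero_vec (n : nat) (x : Vec) : Prop :=
  exists i, (i < n)%nat /\ x i <> C0.

Definition hermitian (n : nat) (A : Mat) : Prop := meq n (madj A) A.
Definition posdef (n : nat) (A : Mat) : Prop :=
  hermitian n A /\ forall x, nonzero_vec n x -> 0 < re (qform n A x).
Definition possemidef (n : nat) (A : Mat) : Prop :=
  hermitian n A /\ forall x, 0 <= re (qform n A x).

Definition loewner_le (n : nat) (A B : Mat) : Prop := possemidef n (msub B A).

Definition accretive (n : nat) (A : Mat) : Prop := posdef n (ReM A).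

Definition is_inverse (n : nat) (A X : Mat) : Prop :=
  meq n (mmul n A X) mId /\ meq n (mmul n X A) mId.
Definition minv (n : nat) (A : Mat) : Mat :=
  epsilon (inhabits mzero) (fun X => is_inverse n A X).

Definition harm (n : nat) (t : R) (A B : Mat) : Mat :=
  minv n (madd (mscal (1 - t) (minv n A)) (mscal t (minv n B))).

(* ---------- probability measures on [0,1] ----------
   No measure theory is available; a Borel probability measure nu on [0,1]
   is represented (Riesz) by its integration functional L g = int g dnu,
   a normalized positive linear functional on C([0,1]) which only depends
   on the values of g on [0,1]. *)
Definition in01 (t : R) : Prop := 0 <= t <= 1.
Definition cont01 (g : R -> R) : Prop :=
  forall t, in01 t -> limit1_in g in01 (g t) t.

Definition prob01 (L : (R -> R) -> R) : Prop :=
  (forall g h, (forall t, in01 t -> g t = h t) -> L g = L h) /\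
  (forall a b g h, cont01 g -> cont01 h ->
     L (fun t => a * g t + b * h t) = a * L g + b * L h) /\
  (forall g, cont01 g -> (forall t, in01 t -> 0 <= g t) -> 0 <= L g) /\
  L (fun _ => 1) = 1.

Definition mint (L : (R -> R) -> R) (F : R -> Mat) : Mat :=
  fun i j => mkC (L (fun t => re (F t i j))) (L (fun t => im (F t i j))).

Definition msigma (n : nat) (L : (R -> R) -> R) (A B : Mat) : Mat :=
  mint L (fun t => harm n t A B).

Definition unitary (n : nat) (U : Mat) : Prop :=
  meq n (mmul n (madj U) U) mId /\ meq n (mmul n U (madj U)) mId.

Definition matfun (n : nat) (f : R -> R) (A F : Mat) : Prop :=
  exists (U : Mat) (l : nat -> R),
    unitary n U /\ (forall i, (i < n)%nat -> 0 < l i) /\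
    meq n A (mmul n (mmul n U (mdiag l)) (madj U)) /\
    meq n F (mmul n (mmul n U (mdiag (fun i => f (l i)))) (madj U)).

Definition matrix_monotone (f : R -> R) : Prop :=
  forall (m : nat) (A B FA FB : Mat),
    posdef m A -> loewner_le m A B ->
    matfun m f A FA -> matfun m f B FB -> loewner_le m FA FB.

Definition in_m (f : R -> R) : Prop :=
  matrix_monotone f /\ (forall x, 0 < x -> 0 < f x) /\ f 1 = 1.

Definition represents (f : R -> R) (L : (R -> R) -> R) : Prop :=
  prob01 L /\ forall x, 0 < x -> f x = L (fun t => / ((1 - t) + t * / x)).

(* Main.v *)
Require Import Defs.
From Stdlib Require Import Reals.
Open Scope R_scope.
From Stdlib Require Import Lra Lia ClassicalEpsilon.

Definition clamp (t : R) : R := (Rabs t - Rabs (t - 1) + 1) / 2.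
Lemma clamp_in01 t : 0 <= clamp t <= 1.
Proof. unfold clamp; unfold Rabs; destruct (Rcase_abs t); destruct (Rcase_abs (t - 1)); lra. Qed.
Lemma clamp_id t : 0 <= t <= 1 -> clamp t = t.
Proof. intros h; unfold clamp; unfold Rabs; destruct (Rcase_abs t); destruct (Rcase_abs (t - 1)); lra. Qed.
Lemma clamp_cont : continuity clamp.
Proof.
  unfold clamp. apply continuity_mult.
  - apply continuity_plus; [apply continuity_minus|].
    + apply Rcontinuity_abs.
    + intro x. apply (continuity_pt_comp (fun t => t - 1) Rabs).
      * apply continuity_minus; [apply derivable_continuous; apply derivable_id| apply continuity_const; intros ? ?; reflexivity].
      * apply Rcontinuity_abs.
    + apply continuity_const; intros ? ?; reflexivity.
  - apply continuity_const; intros ? ?; reflexivity.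
Qed.

Definition good (g : R -> R) := exists h, continuity h /\ forall t, in01 t -> g t = h t.

Lemma good_cont01 g : good g -> cont01 g.
Proof.
  intros [h [hc he]] t ht. intros eps heps.
  destruct (hc t eps heps) as [del [hdel hd]].
  exists del; split; [exact hdel|]. intros y [hy hyd].
  rewrite (he y hy), (he t ht).
  destruct (Req_dec t y) as [e|ne].
  - subst y. unfold dist; simpl; unfold R_dist. rewrite Rminus_diag, Rabs_R0. exact heps.
  - apply hd. split; [split; [exact I| exact ne] | exact hyd].
Qed.
Lemma good_ext g1 g2 : (forall t, in01 t -> g1 t = g2 t) -> good g2 -> good g1.
Proof. intros e [h [hc he]]. exists h; split; [exact hc|]. intros t ht; rewrite e by exact ht; auto. Qed.
Lemma good_of_cont h : continuity h -> good h.
Proof. intros hc; exists h; split; auto. Qed.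
Lemma good_const c : good (fun _ => c).
Proof. apply good_of_cont. apply continuity_const; intros ? ?; reflexivity. Qed.
Lemma good_add g1 g2 : good g1 -> good g2 -> good (fun t => g1 t + g2 t).
Proof.
  intros [h1 [c1 e1]] [h2 [c2 e2]]. exists (fun t => h1 t + h2 t); split.
  - apply (continuity_plus h1 h2 c1 c2).
  - intros t ht; rewrite e1, e2 by exact ht; reflexivity.
Qed.
Lemma good_scal c g : good g -> good (fun t => c * g t).
Proof.
  intros [h [hc e]]. exists (fun t => c * h t); split.
  - apply (continuity_scal h c hc).
  - intros t ht; rewrite e by exact ht; reflexivity.
Qed.
Lemma good_sub g1 g2 : good g1 -> good g2 -> good (fun t => g1 t - g2 t).
Proof.
  intros h1 h2. apply good_ext with (fun t => g1 t + (-1) * g2 t).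
  - intros; ring.
  - apply good_add; [exact h1| apply good_scal; exact h2].
Qed.

Fixpoint Rsum (m : nat) (f : nat -> R) : R :=
  match m with O => 0 | S k => Rsum k f + f k end.
Lemma Rsum_ext m f g : (forall k, (k < m)%nat -> f k = g k) -> Rsum m f = Rsum m g.
Proof. induction m; intros h; simpl; [reflexivity|]. rewrite IHm, h; auto. Qed.
Lemma good_Rsum m (g : nat -> R -> R) : (forall k, (k < m)%nat -> good (g k)) ->
  good (fun t => Rsum m (fun k => g k t)).
Proof.
  induction m; intros h; simpl.
  - apply good_const.
  - apply good_add; [apply IHm; intros; apply h; lia | apply h; lia].
Qed.
Lemma re_Csum m f : re (Csum m f) = Rsum m (fun k => re (f k)).
Proof. induction m; simpl; [reflexivity| rewrite IHm; reflexivity]. Qed.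
Lemma im_Csum m f : im (Csum m f) = Rsum m (fun k => im (f k)).
Proof. induction m; simpl; [reflexivity| rewrite IHm; reflexivity]. Qed.

Section Lsec.
Variable L : (R -> R) -> R.
Hypothesis hL : prob01 L.
Lemma Lext g h : (forall t, in01 t -> g t = h t) -> L g = L h.
Proof. destruct hL as [h1 _]; apply h1. Qed.
Lemma Llin a b g h : good g -> good h -> L (fun t => a * g t + b * h t) = a * L g + b * L h.
Proof. destruct hL as [_ [h2 _]]; intros; apply h2; apply good_cont01; auto. Qed.
Lemma Lpos g : good g -> (forall t, in01 t -> 0 <= g t) -> 0 <= L g.
Proof. destruct hL as [_ [_ [h3 _]]]; intros; apply h3; [apply good_cont01|]; auto. Qed.
Lemma L1 : L (fun _ => 1) = 1.
Proof. destruct hL as [_ [_ [_ h4]]]; exact h4. Qed.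
Lemma L_add g h : good g -> good h -> L (fun t => g t + h t) = L g + L h.
Proof.
  intros; transitivity (L (fun t => 1 * g t + 1 * h t)).
  - apply Lext; intros; ring.
  - rewrite Llin by auto; ring.
Qed.
Lemma L_scal c g : good g -> L (fun t => c * g t) = c * L g.
Proof.
  intros; transitivity (L (fun t => c * g t + 0 * g t)).
  - apply Lext; intros; ring.
  - rewrite Llin by auto; ring.
Qed.
Lemma L_sub g h : good g -> good h -> L (fun t => g t - h t) = L g - L h.
Proof.
  intros; transitivity (L (fun t => 1 * g t + (-1) * h t)).
  - apply Lext; intros; ring.
  - rewrite Llin by auto; ring.
Qed.
Lemma L_const c : L (fun _ => c) = c.
Proof.
  transitivity (L (fun _ => c * 1)).
  - apply Lext; intros; ring.
  - rewrite L_scal by apply good_const. rewrite L1; ring.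
Qed.
Lemma L_Rsum m (g : nat -> R -> R) : (forall k, (k < m)%nat -> good (g k)) ->
  L (fun t => Rsum m (fun k => g k t)) = Rsum m (fun k => L (g k)).
Proof.
  induction m; intros h; simpl.
  - apply L_const.
  - rewrite L_add.
    + rewrite IHm; [reflexivity| intros; apply h; lia].
    + apply good_Rsum; intros; apply h; lia.
    + apply h; lia.
Qed.

Lemma qform_re n A x : re (qform n A x) =
  Rsum n (fun i => Rsum n (fun j =>
    re (Cmul (Cconj (x i)) (x j)) * re (A i j) - im (Cmul (Cconj (x i)) (x j)) * im (A i j))).
Proof.
  unfold qform; rewrite re_Csum; apply Rsum_ext; intros i _.
  rewrite re_Csum; apply Rsum_ext; intros j _.
  destruct (x i), (x j), (A i j); simpl; ring.
Qed.

Lemma re_qform_mint n (F : R -> Mat) x :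
  (forall i j, (i < n)%nat -> (j < n)%nat -> good (fun t => re (F t i j)) /\ good (fun t => im (F t i j))) ->
  re (qform n (mint L F) x) = L (fun t => re (qform n (F t) x)).
Proof.
  intros hF.
  rewrite (Lext _ (fun t => Rsum n (fun i => Rsum n (fun j =>
    re (Cmul (Cconj (x i)) (x j)) * re (F t i j) - im (Cmul (Cconj (x i)) (x j)) * im (F t i j)))))
    by (intros; apply qform_re).
  rewrite qform_re.
  rewrite L_Rsum.
  - apply Rsum_ext; intros i hi.
    rewrite L_Rsum.
    + apply Rsum_ext; intros j hj. destruct (hF i j hi hj) as [g1 g2].
      rewrite L_sub, !L_scal; try apply good_scal; auto.
    + intros j hj; destruct (hF i j hi hj) as [g1 g2]. apply good_sub; apply good_scal; auto.
  - intros i hi; apply good_Rsum; intros j hj; destruct (hF i j hi hj) as [g1 g2].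
    apply good_sub; apply good_scal; auto.
Qed.

Lemma mint_herm n (F : R -> Mat) :
  (forall i j, (i < n)%nat -> (j < n)%nat -> good (fun t => re (F t i j)) /\ good (fun t => im (F t i j))) ->
  (forall t, in01 t -> meq n (madj (F t)) (F t)) ->
  meq n (madj (mint L F)) (mint L F).
Proof.
  intros hg hh i j hi hj. unfold madj, mint, Cconj; simpl. f_equal.
  - apply Lext; intros t ht. specialize (hh t ht i j hi hj). unfold madj in hh.
    rewrite <- hh; reflexivity.
  - rewrite <- (Ropp_involutive (L (fun t => im (F t i j)))). f_equal.
    transitivity (L (fun t => -1 * im (F t i j))).
    + apply Lext; intros t ht. specialize (hh t ht j i hj hi). unfold madj in hh.
      rewrite <- hh; simpl; ring.
    + rewrite L_scal by (apply (hg i j hi hj)). ring.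
Qed.
End Lsec.
Lemma fin1 a b : b <= a -> 0 <= a - b. Proof. lra. Qed.
Lemma fin2 a b c : c = a - b -> 0 <= c -> 0 < b -> 0 < a. Proof. lra. Qed.

From mathcomp Require Import all_boot all_order all_algebra.
From mathcomp Require Import complex Rstruct.
Import Order.TTheory GRing.Theory Num.Theory.
Set Implicit Arguments. Unset Strict Implicit. Unset Printing Implicit Defensive.
Local Open Scope R_scope.
Lemma half_twice (a : R) : /2 * (a + a) = a. Proof. field. Qed.
Local Close Scope R_scope.
Local Open Scope ring_scope.
Local Open Scope complex_scope.
Definition toC (z : Defs.C) : complex R := Complex (re z) (im z).
Lemma toC_add z w : toC (Cadd z w) = toC z + toC w. Proof. by case: z; case: w. Qed.
Lemma toC_mul z w : toC (Cmul z w) = toC z * toC w. Proof. by case: z; case: w. Qed.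
Lemma toC_conj z : toC (Cconj z) = conjc (toC z). Proof. by case: z. Qed.
Lemma toC_opp z : toC (Copp z) = - toC z. Proof. by case: z. Qed.
Lemma toC_0 : toC Defs.C0 = 0. Proof. by []. Qed.
Lemma toC_1 : toC Defs.C1 = 1. Proof. by []. Qed.
Lemma toC_scal r z : toC (Cscal r z) = r%:C * toC z.
Proof. case: z => a b; rewrite /toC /=. apply/eqP; rewrite eq_complex /= !mul0r subr0 addr0. by rewrite !eqxx. Qed.
Lemma toC_inj z w : toC z = toC w -> z = w.
Proof. by case: z; case: w => ? ? ? ? [-> ->]. Qed.
Lemma toC_sum n g : toC (Csum n g) = \sum_(k < n) toC (g k).
Proof. elim: n => [|n IH]; first by rewrite big_ord0. by rewrite big_ord_recr /= toC_add IH. Qed.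

Definition CM := complex R.
Definition toM n (A : Mat) : 'M[CM]_n := \matrix_(i, j) toC (A i j).
Definition adjM m p (M : 'M[CM]_(m, p)) : 'M[CM]_(p, m) := (map_mx conjc M)^T.
Lemma toM_mul n A B : toM n (mmul n A B) = toM n A *m toM n B.
Proof. apply/matrixP => i j; rewrite !mxE toC_sum; apply: eq_bigr => k _. by rewrite toC_mul !mxE. Qed.
Lemma toM_add n A B : toM n (madd A B) = toM n A + toM n B.
Proof. apply/matrixP => i j; by rewrite !mxE toC_add. Qed.
Lemma toM_sub n A B : toM n (msub A B) = toM n A - toM n B.
Proof. apply/matrixP => i j; by rewrite !mxE toC_add toC_opp. Qed.
Lemma toM_scal n r A : toM n (mscal r A) = r%:C *: toM n A.
Proof. apply/matrixP => i j; by rewrite !mxE toC_scal. Qed.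
Lemma toM_adj n A : toM n (madj A) = adjM (toM n A).
Proof. apply/matrixP => i j; by rewrite !mxE toC_conj. Qed.
Lemma toM_id n : toM n mId = 1%:M.
Proof. apply/matrixP => i j; rewrite /mId !mxE. case: (eqVneq i j) => [->|h]; first by rewrite Nat.eqb_refl.
  have : (nat_of_ord i <> nat_of_ord j) by move=> e; move/eqP: h; apply; apply/val_inj.
  by move/Nat.eqb_neq => ->. Qed.
Lemma meqP n A B : meq n A B <-> toM n A = toM n B.
Proof. split.
  - move=> h; apply/matrixP => i j; rewrite !mxE h //; apply/ssrnat.ltP; exact: ltn_ord.
  - rewrite /meq => h i j hi hj; apply: toC_inj.
    have := congr1 (fun M : 'M[CM]_n => M (Ordinal (introT ssrnat.ltP hi)) (Ordinal (introT ssrnat.ltP hj))) h.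
    by rewrite !mxE.
Qed.
Definition fromC (z : CM) : Defs.C := mkC (complex.Re z) (complex.Im z).
Lemma toCK z : toC (fromC z) = z. Proof. by case: z. Qed.
Definition fromM n (M : 'M[CM]_n) : Mat := fun i j =>
  match (insub i : option 'I_n), (insub j : option 'I_n) with
  | Some i', Some j' => fromC (M i' j') | _, _ => Defs.C0 end.
Lemma fromMK n M : toM n (fromM M) = M.
Proof. apply/matrixP => i j; by rewrite mxE /fromM !valK toCK. Qed.
Definition toV n (x : Vec) : 'cV[CM]_n := \col_i toC (x i).
Definition fromV n (v : 'cV[CM]_n) : Vec := fun i =>
  match (insub i : option 'I_n) with Some i' => fromC (v i' 0) | _ => Defs.C0 end.
Lemma fromVK n v : toV n (@fromV n v) = v.
Proof. apply/matrixP => i j; rewrite mxE /fromV valK toCK. by rewrite (ord1 j). Qed.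
Definition QF n (M : 'M[CM]_n) (v : 'cV[CM]_n) : CM := (adjM v *m M *m v) 0 0.
Lemma toC_qform n A x : toC (qform n A x) = QF (toM n A) (toV n x).
Proof.
  rewrite /qform /QF toC_sum mxE.
  under eq_bigr => i _ do rewrite toC_sum.
  rewrite exchange_big /=; apply: eq_bigr => j _.
  rewrite mxE big_distrl /=; apply: eq_bigr => i _.
  by rewrite !mxE !toC_mul toC_conj mulrA.
Qed.
Lemma nonzeroP n x : nonzero_vec n x <-> toV n x != 0.
Proof. split.
  - case=> i [hi hx]; apply/negP => /eqP h.
    have := congr1 (fun v : 'cV[CM]_n => v (Ordinal (introT ssrnat.ltP hi)) 0) h.
    rewrite !mxE /= => e; apply: hx; apply: toC_inj; by rewrite e.
  - move=> h; apply: NNPP => hn; move/negP: h; apply; apply/eqP/matrixP => i j.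
    rewrite !mxE; apply: NNPP => hne; apply: hn; exists i; split.
    + by apply/ssrnat.ltP.
    + by move=> e; apply: hne; rewrite e.
Qed.
Lemma minv_spec n A : toM n A \in unitmx -> toM n (minv n A) = invmx (toM n A).
Proof.
  move=> hu; rewrite /minv.
  have ex : exists X, is_inverse n A X.
  { exists (fromM (invmx (toM n A))); split; apply/meqP; rewrite toM_mul fromMK toM_id.
    - by rewrite mulmxV. - by rewrite mulVmx. }
  case: (epsilon_spec (inhabits mzero) _ ex) => h1 _.
  move/meqP: h1; rewrite toM_mul toM_id => h1.
  by rewrite -[toM n (epsilon _ _)]mul1mx -(mulVmx hu) -mulmxA h1 mulmx1.
Qed.

From mathcomp Require Import lra ring.
Local Open Scope ring_scope.
Local Open Scope complex_scope.
Notation Rc := complex.Re.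
Notation Ic := complex.Im.

Lemma adjM_mul m p q (A : 'M[CM]_(m,p)) (B : 'M[CM]_(p,q)) : adjM (A *m B) = adjM B *m adjM A.
Proof. by rewrite /adjM map_mxM trmx_mul. Qed.
Lemma adjM_add m p (A B : 'M[CM]_(m,p)) : adjM (A + B) = adjM A + adjM B.
Proof. by rewrite /adjM map_mxD linearD. Qed.
Lemma adjM_scale m p c (A : 'M[CM]_(m,p)) : adjM (c *: A) = conjc c *: adjM A.
Proof. by rewrite /adjM map_mxZ linearZ. Qed.
Lemma adjMK m p (A : 'M[CM]_(m,p)) : adjM (adjM A) = A.
Proof. apply/matrixP => i j; by rewrite !mxE conjcK. Qed.
Lemma adjM_inv n (A : 'M[CM]_n) : adjM (invmx A) = invmx (adjM A).
Proof. by rewrite /adjM map_invmx trmx_inv. Qed.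
Lemma adjM0 m p : adjM (0 : 'M[CM]_(m,p)) = 0.
Proof. apply/matrixP => i j; by rewrite !mxE conjc0. Qed.
Lemma conjc_realC (t : R) : conjc (t%:C) = t%:C. Proof. by rewrite conjc_real. Qed.

Definition ip n (u w : 'cV[CM]_n) : CM := (adjM u *m w) 0 0.
Lemma ipDl n (u u' w : 'cV[CM]_n) : ip (u + u') w = ip u w + ip u' w.
Proof. by rewrite /ip adjM_add mulmxDl mxE. Qed.
Lemma ipDr n (u w w' : 'cV[CM]_n) : ip u (w + w') = ip u w + ip u w'.
Proof. by rewrite /ip mulmxDr mxE. Qed.
Lemma ipZl n c (u w : 'cV[CM]_n) : ip (c *: u) w = conjc c * ip u w.
Proof. by rewrite /ip adjM_scale -scalemxAl mxE. Qed.
Lemma ipZr n c (u w : 'cV[CM]_n) : ip u (c *: w) = c * ip u w.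
Proof. by rewrite /ip -scalemxAr mxE. Qed.
Lemma ip0r n (u : 'cV[CM]_n) : ip u 0 = 0.
Proof. by rewrite /ip mulmx0 mxE. Qed.
Lemma ip0l n (u : 'cV[CM]_n) : ip 0 u = 0.
Proof. by rewrite /ip adjM0 mul0mx mxE. Qed.
Lemma ipM n (M : 'M[CM]_n) (u w : 'cV[CM]_n) : ip u (M *m w) = ip (adjM M *m u) w.
Proof. by rewrite /ip adjM_mul adjMK mulmxA. Qed.
Lemma ipC n (u w : 'cV[CM]_n) : ip w u = conjc (ip u w).
Proof.
  rewrite /ip !mxE rmorph_sum; apply: eq_bigr => k _.
  by rewrite !mxE rmorphM /= conjcK mulrC.
Qed.
Lemma QFE n (M : 'M[CM]_n) v : QF M v = ip v (M *m v).
Proof. by rewrite /QF /ip mulmxA. Qed.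
Lemma QFZ n c (M : 'M[CM]_n) v : QF (c *: M) v = c * QF M v.
Proof. by rewrite !QFE -scalemxAl ipZr. Qed.
Lemma QFD n (M N : 'M[CM]_n) v : QF (M + N) v = QF M v + QF N v.
Proof. by rewrite !QFE mulmxDl ipDr. Qed.
Lemma QFN n (M N : 'M[CM]_n) v : QF (M - N) v = QF M v - QF N v.
Proof. by rewrite !QFE mulmxBl /ip mulmxBr !mxE. Qed.
Lemma QF_adj n (M : 'M[CM]_n) v : QF (adjM M) v = conjc (QF M v).
Proof. by rewrite !QFE ipM adjMK ipC. Qed.
Lemma Rc_conj (z : CM) : Rc (conjc z) = Rc z. Proof. by case: z. Qed.
Lemma Rc_add (z w : CM) : Rc (z + w) = Rc z + Rc w. Proof. by case: z; case: w. Qed.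
Lemma Rc_sub (z w : CM) : Rc (z - w) = Rc z - Rc w. Proof. by case: z; case: w. Qed.
Lemma Rc_mulr (t : R) (z : CM) : Rc (t%:C * z) = t * Rc z.
Proof. case: z => a b /=. ring. Qed.

Definition hpart n (M : 'M[CM]_n) := (Rinv (IZR (Zpos (xO xH))))%:C *: (M + adjM M).
Lemma Rc_QF_hpart n (M : 'M[CM]_n) v : Rc (QF (hpart M) v) = Rc (QF M v).
Proof.
  rewrite /hpart QFZ Rc_mulr QFD QF_adj Rc_add Rc_conj.
  set a := Rc _. exact: half_twice.
Qed.
Lemma hpart_herm n (M : 'M[CM]_n) : adjM (hpart M) = hpart M.
Proof. by rewrite /hpart adjM_scale conjc_realC adjM_add adjMK addrC. Qed.

Definition racc n (M : 'M[CM]_n) := forall v, v != 0 -> 0 < Rc (QF M v).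
Lemma racc_ge0 n (M : 'M[CM]_n) v : racc M -> 0 <= Rc (QF M v).
Proof.
  move=> h; case: (eqVneq v 0) => [->|hv]; last by apply/ltW/h.
  by rewrite QFE mulmx0 ip0r.
Qed.
Lemma racc_unit n (M : 'M[CM]_n) : racc M -> M \in unitmx.
Proof.
  move=> h; rewrite unitmxE unitfE -det_tr; apply/negP => /det0P [w hw hwM].
  have hv : w^T != 0 by rewrite -(inj_eq (@trmx_inj _ _ _)) trmxK linear0.
  have := h _ hv; rewrite QFE.
  have -> : M *m w^T = 0 by rewrite -(trmxK M) -trmx_mul hwM linear0.
  by rewrite ip0r ltxx.
Qed.
Lemma racc_inv n (M : 'M[CM]_n) : racc M -> racc (invmx M).
Proof.
  move=> h v hv; have hu := racc_unit h.
  set y := invmx M *m v.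
  have hvy : v = M *m y by rewrite /y mulmxA mulmxV // mul1mx.
  have hy : y != 0 by apply: contraNneq hv => e; rewrite hvy e mulmx0.
  rewrite QFE -/y {1}hvy ipC Rc_conj -QFE; exact: h.
Qed.
Lemma racc_comb n (M N : 'M[CM]_n) (t : R) : racc M -> racc N -> 0 <= t <= 1 ->
  racc ((1 - t)%:C *: M + t%:C *: N).
Proof.
  move=> hM hN /andP [h0 h1] v hv; rewrite QFD !QFZ Rc_add !Rc_mulr.
  have := hM _ hv; have := hN _ hv; nra.
Qed.
Lemma racc_hpart n (M : 'M[CM]_n) : racc M -> racc (hpart M).
Proof. by move=> h v hv; rewrite Rc_QF_hpart; apply: h. Qed.
Section Key.
Variable n : nat.
Implicit Types (A B P Q : 'M[CM]_n) (x : 'cV[CM]_n).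

Definition Hm (t : R) A B := invmx ((1 - t)%:C *: invmx A + t%:C *: invmx B).

Lemma harm_QF (t : R) A B x : A \in unitmx -> B \in unitmx ->
  ((1 - t)%:C *: invmx A + t%:C *: invmx B) \in unitmx ->
  let y := Hm t A B *m x in let u := invmx A *m y in let v := invmx B *m y in
  [/\ x = (1 - t)%:C *: u + t%:C *: v, A *m u = y, B *m v = y &
     QF (Hm t A B) x = (1 - t)%:C * QF A u + t%:C * QF B v].
Proof.
  move=> hA hB hC y u v.
  have hx : x = (1 - t)%:C *: u + t%:C *: v.
  { by rewrite /u /v !scalemxAl -mulmxDl /y /Hm mulmxA mulmxV // mul1mx. }
  have hu : A *m u = y by rewrite /u mulmxA mulmxV // mul1mx.
  have hv : B *m v = y by rewrite /v mulmxA mulmxV // mul1mx.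
  split => //.
  rewrite QFE -/y {1}hx ipDl !ipZl !conjc_realC !QFE hu hv //.
Qed.

End Key.
Section Key2.
Variable n : nat.
Implicit Types (A B P Q : 'M[CM]_n) (x : 'cV[CM]_n).
Lemma var_id P Q (s r : CM) (x u v u0 v0 y0 : 'cV[CM]_n) :
  adjM P = P -> adjM Q = Q -> conjc s = s -> conjc r = r ->
  x = s *: u + r *: v -> x = s *: u0 + r *: v0 -> P *m u0 = y0 -> Q *m v0 = y0 ->
  s * QF P u + r * QF Q v =
  (s * QF P u0 + r * QF Q v0) + s * QF P (u - u0) + r * QF Q (v - v0).
Proof.
  move=> herP herQ cs cr hx hx0 hu0 hv0.
  have hab : s *: (u - u0) + r *: (v - v0) = 0.
  { rewrite !scalerBr addrACA -opprD -hx -hx0. by rewrite subrr. }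
  have e1 : QF P u = QF P u0 + ip y0 (u - u0) + ip (u - u0) y0 + QF P (u - u0).
  { rewrite -{1}(subrK u0 u) [_ + u0]addrC.
    move: (u - u0) => a.
    rewrite !QFE mulmxDr !ipDl !ipDr hu0 ipM herP hu0. by rewrite !addrA. }
  have e2 : QF Q v = QF Q v0 + ip y0 (v - v0) + ip (v - v0) y0 + QF Q (v - v0).
  { rewrite -{1}(subrK v0 v) [_ + v0]addrC.
    move: (v - v0) => a.
    rewrite !QFE mulmxDr !ipDl !ipDr hv0 ipM herQ hv0. by rewrite !addrA. }
  have e3 : s * ip y0 (u - u0) + r * ip y0 (v - v0) = 0.
  { by rewrite -!ipZr -ipDr hab ip0r. }
  have e4 : s * ip (u - u0) y0 + r * ip (v - v0) y0 = 0.
  { rewrite -{1}cs -{1}cr. by rewrite -!ipZl -ipDl hab ip0l. }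
  rewrite e1 e2.
  move: (QF P u0) (QF Q v0) (ip y0 (u - u0)) (ip y0 (v - v0)) (ip (u - u0) y0) (ip (v - v0) y0)
    (QF P (u - u0)) (QF Q (v - v0)) e3 e4 => a a' b b' c c' d d' e3 e4.
  have -> : s * (a + b + c + d) + r * (a' + b' + c' + d') =
      (s * a + r * a') + (s * b + r * b') + (s * c + r * c') + s * d + r * d' by ring.
  rewrite e3 e4; ring.
Qed.
Lemma key_abs A B (t : R) (qH qK : CM) (x u v u0 v0 y y0 : 'cV[CM]_n) :
  racc A -> racc B -> 0 <= t <= 1 ->
  x = (1 - t)%:C *: u + t%:C *: v -> A *m u = y -> B *m v = y ->
  qH = (1 - t)%:C * QF A u + t%:C * QF B v ->
  x = (1 - t)%:C *: u0 + t%:C *: v0 -> hpart A *m u0 = y0 -> hpart B *m v0 = y0 ->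
  qK = (1 - t)%:C * QF (hpart A) u0 + t%:C * QF (hpart B) v0 ->
  Rc qK <= Rc qH.
Proof.
  move=> rA rB ht hx hu hv eH hx0 hu0 hv0 eK.
  have rP := racc_hpart rA; have rQ := racc_hpart rB.
  have eq := var_id (hpart_herm A) (hpart_herm B) (conjc_realC _) (conjc_realC _) hx hx0 hu0 hv0.
  have eHP : Rc qH = Rc ((1 - t)%:C * QF (hpart A) u + t%:C * QF (hpart B) v).
  { by rewrite eH !Rc_add !Rc_mulr !Rc_QF_hpart. }
  rewrite eHP eq -eK !Rc_add !Rc_mulr.
  have := racc_ge0 (u - u0) rP; have := racc_ge0 (v - v0) rQ.
  move: ht => /andP [h0 h1]; nra.
Qed.
Lemma key (t : R) A B x : racc A -> racc B -> 0 <= t <= 1 ->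
  Rc (QF (Hm t (hpart A) (hpart B)) x) <= Rc (QF (Hm t A B) x).
Proof.
  move=> rA rB ht.
  have rP := racc_hpart rA; have rQ := racc_hpart rB.
  have uC := racc_unit (racc_comb (racc_inv rA) (racc_inv rB) ht).
  have uK := racc_unit (racc_comb (racc_inv rP) (racc_inv rQ) ht).
  have [hx hu hv eH] := harm_QF x (racc_unit rA) (racc_unit rB) uC.
  have [hx0 hu0 hv0 eK] := harm_QF x (racc_unit rP) (racc_unit rQ) uK.
  exact: (key_abs rA rB ht hx hu hv eH hx0 hu0 hv0 eK).
Qed.
Lemma Hm_racc (t : R) A B : racc A -> racc B -> 0 <= t <= 1 -> racc (Hm t A B).
Proof. move=> rA rB ht; apply: racc_inv; apply: racc_comb => //; exact: racc_inv. Qed.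
Lemma Hm_herm (t : R) A B : adjM A = A -> adjM B = B -> adjM (Hm t A B) = Hm t A B.
Proof.
  move=> hA hB; rewrite /Hm adjM_inv adjM_add !adjM_scale !conjc_realC !adjM_inv hA hB //.
Qed.
End Key2.

Definition ccont (f : R -> CM) := continuity (fun t => Rc (f t)) /\ continuity (fun t => Ic (f t)).
Definition mcont m p (F : R -> 'M[CM]_(m, p)) := forall i j, ccont (fun t => F t i j).

Lemma rcont_const (c : R) : continuity (fun _ => c).
Proof. by apply: continuity_const => ? ?. Qed.
Lemma rcont_add (f g : R -> R) : continuity f -> continuity g -> continuity (fun t => f t + g t).
Proof. move=> hf hg; exact: (continuity_plus _ _ hf hg). Qed.
Lemma rcont_opp (f : R -> R) : continuity f -> continuity (fun t => - f t).
Proof. move=> hf; exact: (continuity_opp _ hf). Qed.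
Lemma rcont_mul (f g : R -> R) : continuity f -> continuity g -> continuity (fun t => f t * g t).
Proof. move=> hf hg; exact: (continuity_mult _ _ hf hg). Qed.
Lemma rcont_inv (f : R -> R) : continuity f -> (forall t, f t != 0) -> continuity (fun t => (f t)^-1).
Proof. move=> hf h; apply: (continuity_inv _ hf) => t; exact/eqP. Qed.

Lemma ccont_const c : ccont (fun _ => c).
Proof. split; exact: rcont_const. Qed.
Lemma ccont_realC (g : R -> R) : continuity g -> ccont (fun t => (g t)%:C).
Proof. by split => //=; exact: rcont_const. Qed.
Lemma ccont_add f g : ccont f -> ccont g -> ccont (fun t => f t + g t).
Proof.
  move=> [f1 f2] [g1 g2]; split.
  - apply: (continuity_eq _ (rcont_add f1 g1)) => t. by case: (f t); case: (g t).
  - apply: (continuity_eq _ (rcont_add f2 g2)) => t. by case: (f t); case: (g t).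
Qed.
Lemma ccont_opp f : ccont f -> ccont (fun t => - f t).
Proof.
  move=> [f1 f2]; split.
  - apply: (continuity_eq _ (rcont_opp f1)) => t. by case: (f t).
  - apply: (continuity_eq _ (rcont_opp f2)) => t. by case: (f t).
Qed.
Lemma ccont_mul f g : ccont f -> ccont g -> ccont (fun t => f t * g t).
Proof.
  move=> [f1 f2] [g1 g2]; split.
  - apply: (continuity_eq _ (rcont_add (rcont_mul f1 g1) (rcont_opp (rcont_mul f2 g2)))) => t.
    by case: (f t); case: (g t).
  - apply: (continuity_eq _ (rcont_add (rcont_mul f1 g2) (rcont_mul f2 g1))) => t.
    by case: (f t); case: (g t).
Qed.
Lemma ccont_conj f : ccont f -> ccont (fun t => conjc (f t)).
Proof.
  move=> [f1 f2]; split.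
  - apply: (continuity_eq _ f1) => t. by case: (f t).
  - apply: (continuity_eq _ (rcont_opp f2)) => t. by case: (f t).
Qed.
Lemma ccont_inv f : ccont f -> (forall t, f t != 0) -> ccont (fun t => (f t)^-1).
Proof.
  move=> [f1 f2] hnz.
  have hn : forall t, Rc (f t) ^+ 2 + Ic (f t) ^+ 2 != 0.
  { move=> t; move: (hnz t); case: (f t) => a b hab /=.
    apply/negP => /eqP h; move/negP: hab; apply; apply/eqP.
    have ha : a = 0 by apply/eqP; rewrite -sqrf_eq0 eq_le sqr_ge0 andbT -h lerDl sqr_ge0.
    have hb : b = 0 by move: h; rewrite ha expr0n /= add0r => /eqP; rewrite sqrf_eq0 => /eqP.
    by rewrite ha hb. }
  have hc : continuity (fun t => (Rc (f t) ^+ 2 + Ic (f t) ^+ 2)^-1).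
  { apply: rcont_inv => //. apply: rcont_add; exact: continuity_exp. }
  split.
  - apply: (continuity_eq _ (rcont_mul f1 hc)) => t. by case: (f t).
  - apply: (continuity_eq _ (rcont_opp (rcont_mul f2 hc))) => t. by case: (f t) => a b /=.
Qed.
Lemma ccont_ext f g : (forall t, f t = g t) -> ccont f -> ccont g.
Proof.
  move=> e [h1 h2]; split.
  - apply: (continuity_eq _ h1) => t; by rewrite e.
  - apply: (continuity_eq _ h2) => t; by rewrite e.
Qed.
Lemma ccont_sum (I : Type) (r : seq I) (P : pred I) (F : I -> R -> CM) :
  (forall i, ccont (F i)) -> ccont (fun t => \sum_(i <- r | P i) F i t).
Proof.
  move=> h; elim: r => [|a r IH].
  - apply: (ccont_ext _ (ccont_const 0)) => t; by rewrite big_nil.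
  - case hP: (P a).
    + apply: (ccont_ext _ (ccont_add (h a) IH)) => t; by rewrite big_cons hP.
    + apply: (ccont_ext _ IH) => t; by rewrite big_cons hP.
Qed.
Lemma ccont_prod (I : Type) (r : seq I) (P : pred I) (F : I -> R -> CM) :
  (forall i, ccont (F i)) -> ccont (fun t => \prod_(i <- r | P i) F i t).
Proof.
  move=> h; elim: r => [|a r IH].
  - apply: (ccont_ext _ (ccont_const 1)) => t; by rewrite big_nil.
  - case hP: (P a).
    + apply: (ccont_ext _ (ccont_mul (h a) IH)) => t; by rewrite big_cons hP.
    + apply: (ccont_ext _ IH) => t; by rewrite big_cons hP.
Qed.
Lemma mcont_const m p (M : 'M[CM]_(m,p)) : mcont (fun _ => M).
Proof. move=> i j; exact: ccont_const. Qed.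
Lemma mcont_add m p (F G : R -> 'M[CM]_(m,p)) : mcont F -> mcont G -> mcont (fun t => F t + G t).
Proof. move=> hF hG i j; apply: (ccont_ext _ (ccont_add (hF i j) (hG i j))) => t; by rewrite mxE. Qed.
Lemma mcont_scale m p (c : R -> CM) (F : R -> 'M[CM]_(m,p)) : ccont c -> mcont F -> mcont (fun t => c t *: F t).
Proof. move=> hc hF i j; apply: (ccont_ext _ (ccont_mul hc (hF i j))) => t; by rewrite mxE. Qed.
Lemma mcont_mul m p q (F : R -> 'M[CM]_(m,p)) (G : R -> 'M[CM]_(p,q)) :
  mcont F -> mcont G -> mcont (fun t => F t *m G t).
Proof.
  move=> hF hG i j.
  have hs := @ccont_sum _ (index_enum 'I_p) xpredT (fun k t => F t i k * G t k j) (fun k => ccont_mul (hF i k) (hG k j)).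
  apply: (ccont_ext _ hs) => t /=; by rewrite mxE.
Qed.
Lemma ccont_det m (F : R -> 'M[CM]_m) : mcont F -> ccont (fun t => \det (F t)).
Proof.
  move=> hF; rewrite /determinant.
  apply: ccont_sum => s; apply: ccont_mul; first exact: ccont_const.
  apply: ccont_prod => i; exact: hF.
Qed.
Lemma mcont_inv m (F : R -> 'M[CM]_m) : mcont F -> (forall t, F t \in unitmx) -> mcont (fun t => invmx (F t)).
Proof.
  move=> hF hu i j.
  apply: (ccont_ext (f := fun t => (\det (F t))^-1 * ((-1) ^+ (j + i) * \det (row' j (col' i (F t)))))).
  - move=> t; by rewrite /invmx hu !mxE /cofactor.
  - apply: ccont_mul.
    + apply: ccont_inv; first exact: ccont_det.
      move=> t; have := hu t; by rewrite unitmxE unitfE.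
    + apply: ccont_mul; first exact: ccont_const.
      apply: ccont_det => k l; apply: (ccont_ext _ (hF (lift j k) (lift i l))) => t; by rewrite !mxE.
Qed.
Lemma clamp01 (t : R) : 0 <= clamp t <= 1.
Proof. have [h0 h1] := clamp_in01 t; apply/andP; split; exact/RleP. Qed.
Lemma Hm_mcont n (A B : 'M[CM]_n) : racc A -> racc B -> mcont (fun t => Hm (clamp t) A B).
Proof.
  move=> rA rB; apply: mcont_inv.
  - apply: mcont_add; apply: mcont_scale; try exact: mcont_const; apply: ccont_realC.
    + apply: (continuity_eq _ (rcont_add (rcont_const 1) (rcont_opp clamp_cont))) => t //.
    + exact: clamp_cont.
  - move=> t; apply: racc_unit; apply: racc_comb; try apply: racc_inv => //; exact: clamp01.
Qed.
Lemma QF_cont n (F : R -> 'M[CM]_n) v : mcont F -> continuity (fun t => Rc (QF (F t) v)).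
Proof.
  move=> hF; rewrite /QF.
  have h := mcont_mul (mcont_mul (mcont_const (adjM v)) hF) (mcont_const v).
  exact: (h 0 0).1.
Qed.

Lemma toM_ReM n A : toM n (Defs.ReM A) = hpart (toM n A).
Proof. by rewrite /Defs.ReM toM_scal toM_add toM_adj. Qed.

Lemma re_qform n A x : re (qform n A x) = Rc (QF (toM n A) (toV n x)).
Proof. by rewrite -toC_qform. Qed.

Lemma accretive_racc n A : Defs.accretive n A -> racc (toM n A).
Proof.
  move=> [_ h] v hv.
  have := h (fromV v); rewrite re_qform toM_ReM fromVK Rc_QF_hpart => h1.
  apply/RltP; apply: h1; apply/nonzeroP; by rewrite fromVK.
Qed.

Lemma adjM_sub m p (X Y : 'M[CM]_(m,p)) : adjM (X - Y) = adjM X - adjM Y.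
Proof. apply/matrixP => i j; by rewrite !mxE rmorphB. Qed.

Lemma hermP n M : Defs.hermitian n M <-> adjM (toM n M) = toM n M.
Proof. by rewrite /Defs.hermitian meqP toM_adj. Qed.

Lemma herm_ReM n M : Defs.hermitian n (Defs.ReM M).
Proof. by apply/hermP; rewrite toM_ReM hpart_herm. Qed.

Lemma toM_harm n t A B : racc (toM n A) -> racc (toM n B) -> 0 <= t <= 1 ->
  toM n (harm n t A B) = Hm t (toM n A) (toM n B).
Proof.
  move=> rA rB ht.
  have uA := racc_unit rA; have uB := racc_unit rB.
  have eq : toM n (madd (mscal (1 - t) (minv n A)) (mscal t (minv n B))) =
    (1 - t)%:C *: invmx (toM n A) + t%:C *: invmx (toM n B).
  { by rewrite toM_add !toM_scal !minv_spec. }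
  rewrite /harm minv_spec eq //.
  apply: racc_unit; apply: racc_comb => //; exact: racc_inv.
Qed.

Lemma entry n (M : Mat) i j (hi : (i < n)%coq_nat) (hj : (j < n)%coq_nat) :
  toC (M i j) = toM n M (Ordinal (introT ssrnat.ltP hi)) (Ordinal (introT ssrnat.ltP hj)).
Proof. by rewrite mxE. Qed.

Lemma in01P t : in01 t -> 0 <= t <= 1.
Proof. move=> [h0 h1]; apply/andP; split; exact/RleP. Qed.

Section Main.
Variables (n : nat) (L : (R -> R) -> R).
Hypothesis hL : prob01 L.

Lemma good_entries A B : racc (toM n A) -> racc (toM n B) ->
  forall i j, (i < n)%coq_nat -> (j < n)%coq_nat ->
  good (fun t => re (harm n t A B i j)) /\ good (fun t => im (harm n t A B i j)).
Proof.
  move=> rA rB i j hi hj.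
  have hc := Hm_mcont rA rB (Ordinal (introT ssrnat.ltP hi)) (Ordinal (introT ssrnat.ltP hj)).
  split.
  - apply: (good_ext _ _ _ (good_of_cont _ hc.1)) => t ht /=.
    by rewrite clamp_id // -[re _]/(Rc (toC _)) (@entry n _ i j hi hj) toM_harm //; apply: in01P.
  - apply: (good_ext _ _ _ (good_of_cont _ hc.2)) => t ht /=.
    by rewrite clamp_id // -[im _]/(Ic (toC _)) (@entry n _ i j hi hj) toM_harm //; apply: in01P.
Qed.

Lemma good_qform A B x : racc (toM n A) -> racc (toM n B) ->
  good (fun t => re (qform n (harm n t A B) x)).
Proof.
  move=> rA rB.
  apply: (good_ext _ _ _ (good_of_cont _ (QF_cont (toV n x) (Hm_mcont rA rB)))) => t ht /=.
  by rewrite clamp_id // re_qform toM_harm //; apply: in01P.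
Qed.

Lemma herm_msigma A B : racc (toM n A) -> racc (toM n B) ->
  adjM (toM n A) = toM n A -> adjM (toM n B) = toM n B ->
  Defs.hermitian n (msigma n L A B).
Proof.
  move=> rA rB hA hB; rewrite /Defs.hermitian /msigma.
  apply: (mint_herm L hL n _ (good_entries rA rB)) => t ht.
  by apply/meqP; rewrite toM_adj toM_harm ?Hm_herm //; apply: in01P.
Qed.
End Main.

Lemma main7 (n : nat) (A B : Mat) (f : R -> R) (L : (R -> R) -> R) :
  in_m f -> represents f L ->
  Defs.accretive n A -> Defs.accretive n B ->
  loewner_le n (msigma n L (Defs.ReM A) (Defs.ReM B)) (Defs.ReM (msigma n L A B)) /\
  Defs.accretive n (msigma n L A B).
Proof.
  move=> _ [hL _] aA aB.
  have rA := accretive_racc aA; have rB := accretive_racc aB.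
  have rA' : racc (toM n (Defs.ReM A)) by rewrite toM_ReM; apply: racc_hpart.
  have rB' : racc (toM n (Defs.ReM B)) by rewrite toM_ReM; apply: racc_hpart.
  have hA' : adjM (toM n (Defs.ReM A)) = toM n (Defs.ReM A) by rewrite toM_ReM hpart_herm.
  have hB' : adjM (toM n (Defs.ReM B)) = toM n (Defs.ReM B) by rewrite toM_ReM hpart_herm.
  have hT : Defs.hermitian n (msigma n L (Defs.ReM A) (Defs.ReM B)) := herm_msigma hL rA' rB' hA' hB'.
  have eS : forall x, re (qform n (Defs.ReM (msigma n L A B)) x) =
      L (fun t => re (qform n (harm n t A B) x)).
  { move=> x; rewrite re_qform toM_ReM Rc_QF_hpart -re_qform.
    exact: (re_qform_mint L hL n _ x (good_entries rA rB)). }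
  have eT : forall x, re (qform n (msigma n L (Defs.ReM A) (Defs.ReM B)) x) =
      L (fun t => re (qform n (harm n t (Defs.ReM A) (Defs.ReM B)) x)).
  { move=> x; exact: (re_qform_mint L hL n _ x (good_entries rA' rB')). }
  split.
  - split.
    + apply/hermP; rewrite toM_sub adjM_sub.
      by move/hermP: hT => ->; move/hermP: (@herm_ReM n (msigma n L A B)) => ->.
    + move=> x.
      have -> : re (qform n (msub (Defs.ReM (msigma n L A B)) (msigma n L (Defs.ReM A) (Defs.ReM B))) x)
        = re (qform n (Defs.ReM (msigma n L A B)) x) - re (qform n (msigma n L (Defs.ReM A) (Defs.ReM B)) x).
      { by rewrite !re_qform toM_sub QFN Rc_sub. }
      rewrite eS eT -RminusE -(L_sub L hL _ _ (good_qform x rA rB) (good_qform x rA' rB')).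
      apply: (Lpos L hL _ (good_sub _ _ (good_qform x rA rB) (good_qform x rA' rB'))) => t ht.
      have ht' := in01P ht.
      rewrite !re_qform !toM_harm // !toM_ReM.
      have := key (toV n x) rA rB ht'. move/RleP => h. exact: (Rge_le _ _ (Rge_minus _ _ (Rle_ge _ _ h))).
  - split; first exact: herm_ReM.
    move=> x hx; rewrite eS.
    pose h := fun t => Rc (QF (Hm (clamp t) (toM n A) (toM n B)) (toV n x)).
    have hc : continuity h := QF_cont _ (Hm_mcont rA rB).
    have hpos : forall t, Rlt 0 (h t).
    { move=> t; rewrite /h. have hz : toV n x != 0 by apply/nonzeroP. have hh := (Hm_racc rA rB (clamp01 t) hz). exact/RltP. }
    have [mx [hmx _]] := continuity_ab_min h 0 1 Rle_0_1 (fun c _ => hc c).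
    have e1 : L (fun t => re (qform n (harm n t A B) x)) = L h.
    { apply: (Lext L hL) => t ht.
      by rewrite /h clamp_id // re_qform toM_harm //; apply: in01P. }
    clearbody h.
    have e2 : L (fun t => Rminus (h t) (h mx)) = Rminus (L h) (h mx).
    { by rewrite (L_sub L hL _ _ (good_of_cont _ hc) (good_const _)) L_const. }
    have hge : Rle 0 (L (fun t => Rminus (h t) (h mx))).
    { apply: (Lpos L hL _ (good_sub _ _ (good_of_cont _ hc) (good_const _))) => t ht.
      apply: fin1; exact: hmx. }
    rewrite e1. exact: (fin2 _ _ _ e2 hge (hpos mx)).
Qed.


Theorem mainTheorem7 (n : nat) (A B : Mat) (f : R -> R) (L : (R -> R) -> R) :
  in_m f -> represents f L ->
  Defs.accretive n A -> Defs.accretive n B ->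
  Defs.loewner_le n (Defs.msigma n L (Defs.ReM A) (Defs.ReM B)) (Defs.ReM (Defs.msigma n L A B)) /\
  Defs.accretive n (Defs.msigma n L A B).
Proof. exact: main7. Qed.
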